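(* For every $J\subseteq[n]$ and every $j\in J$, the polynomial $\partial_j h^2_{n-|J|+1}(J)$ lies in the ideal $\mathcal I_J=(p_{J,1},\dots,p_{J,n})\subseteq\mathbb C[x_1,\dots,x_n]$.
   Context: $\partial_j=\partial/\partial x_j$. For $S\subseteq[n]$ and an integer $r$, $h^2_r(S)$ is the complete homogeneous symmetric polynomial of degree $r$ in the variables $\{x_s^2:s\in S\}$ (with $h^2_0(S)=1$, $h^2_r(S)=0$ for $r<0$). For $J\subseteq[n]$ and $i\in[n]$ put $r_i=n-|J\cup\{i,\dots,n\}|+1$ and define $p_{J,i}=h^2_{r_i}(J\cup\{i,\dots,n\})$ if $i\notin J$, and $p_{J,i}=\partial_i h^2_{r_i}(J\cup\{i,\dots,n\})$ if $i\in J$. *)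

(* Defs.v *)
From HB Require Import structures.
From mathcomp Require Import all_boot all_order all_algebra.
From mathcomp Require Import complex Rstruct.
From mathcomp Require Import mpoly.

Set Implicit Arguments.
Unset Strict Implicit.
Unset Printing Implicit Defensive.

Import Order.TTheory GRing.Theory Num.Theory.
Local Open Scope ring_scope.

Definition C : fieldType := (Rdefinitions.R)[i].

(* Polynomial ring C[x_1,...,x_n]; variable x_{k+1} is 'X_k, k : 'I_n. *)
Notation Cpoly n := {mpoly C[n]}.

(* h^2_r(S): complete homogeneous symmetric polynomial of degree r in the
   variables {x_s^2 : s in S}, i.e. the sum over all exponent vectors m of
   total degree r supported in S of prod_s (x_s^2)^(m s).  (h^2_0(S) = 1.) *)
Definition h2 (n : nat) (r : nat) (S : {set 'I_n}) : Cpoly n :=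
  \sum_(m : 'X_{1..n < r.+1} |
          (mdeg m == r) && [forall s : 'I_n, (m s != 0%N) ==> (s \in S)])
     \prod_(s < n) ('X_s ^+ 2) ^+ (m s).

(* The set {i, ..., n} (1-based), i.e. {k : 'I_n | i <= k} (0-based). *)
Definition tail_set (n : nat) (i : 'I_n) : {set 'I_n} := [set k : 'I_n | (i <= k)%N].

(* r_i = n - |J u {i,...,n}| + 1  (always >= 1, so nat arithmetic is exact). *)
Definition r_idx (n : nat) (J : {set 'I_n}) (i : 'I_n) : nat :=
  (n - #|J :|: tail_set i|).+1.

Definition pJ (n : nat) (J : {set 'I_n}) (i : 'I_n) : Cpoly n :=
  if i \in J then (h2 (r_idx J i) (J :|: tail_set i))^`M(i)
  else h2 (r_idx J i) (J :|: tail_set i).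

Definition in_ideal (n : nat) (g : 'I_n -> Cpoly n) (f : Cpoly n) : Prop :=
  exists c : 'I_n -> Cpoly n, f = \sum_(i < n) c i * g i.

Definition I_J (n : nat) (J : {set 'I_n}) (f : Cpoly n) : Prop :=
  in_ideal (pJ J) f.

(* Main.v *)
Require Import Defs.
From HB Require Import structures.
From mathcomp Require Import all_boot all_order all_algebra.
From mathcomp Require Import complex Rstruct.
From mathcomp Require Import mpoly.
From mathcomp Require Import zify.
Set Implicit Arguments.
Unset Strict Implicit.
Unset Printing Implicit Defensive.
Import Order.TTheory GRing.Theory Num.Theory.
Local Open Scope ring_scope.

Section S.
Variable n : nat.
Implicit Types (S : {set 'I_n}) (mu : 'X_{1..n}).

Definition okc (r : nat) S mu : bool :=
  (mdeg mu == r.*2)%N && [forall s, ~~ odd (mu s) && ((mu s != 0%N) ==> (s \in S))].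

Lemma prodX2 (m : 'X_{1..n}) :
  \prod_(s < n) (('X_s : Cpoly n) ^+ 2) ^+ (m s) = 'X_[(m *+ 2)%MM].
Proof.
rewrite mpolyXE_id; apply: eq_bigr => s _.
by rewrite mulmnE -exprM mulnC.
Qed.

Lemma h2coeff r S mu : (h2 r S)@_mu = (okc r S mu)%:R.
Proof.
rewrite /h2 raddf_sum /=.
under eq_bigr => m _ do rewrite prodX2 mcoeffX.
case ok: (okc r S mu).
- move: ok => /andP [/eqP hdeg /forallP hall].
  pose m0 : 'X_{1..n} := [multinom (mu i)./2 | i < n].
  have hm0 : (m0 *+ 2)%MM = mu.
    apply/mnmP => i; rewrite mulmnE mnmE.
    have := hall i => /andP [hodd _].
    by rewrite -{2}(odd_double_half (mu i)) (negbTE hodd) add0n -muln2.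
  have hd0 : mdeg m0 = r.
    have := hdeg; rewrite -hm0 mdegMn => h; lia.
  have hb : (mdeg m0 < r.+1)%N by rewrite hd0.
  pose bm0 := BMultinom hb.
  have Pbm0 : (mdeg bm0 == r) && [forall s : 'I_n, (bm0 s != 0%N) ==> (s \in S)].
    rewrite /= hd0 eqxx /=; apply/forallP => s; apply/implyP => hs.
    have := hall s => /andP [_ /implyP]; apply.
    by move: hs; rewrite -hm0 mulmnE muln_eq0 orbF.
  rewrite (bigD1 bm0) //= hm0 eqxx big1 ?addr0 // => m /andP [_ hne].
  case e: ((m : 'X_{1..n}) *+ 2 == mu)%MM => //.
  move: hne; rewrite -(inj_eq val_inj) /= => /eqP []; apply/mnmP => i.
  move/eqP: e; rewrite -hm0 => /mnmP /(_ i); rewrite !mulmnE; lia.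
- apply: big1 => m /andP [/eqP hd /forallP hs].
  case e: ((m : 'X_{1..n}) *+ 2 == mu)%MM => //.
  move/eqP: e => e; move: ok; rewrite -e /okc mdegMn hd -muln2 eqxx /=.
  move/negbT/negP; case; apply/forallP => s; rewrite mulmnE oddM andbF /=.
  apply/implyP => h; have := hs s; rewrite /=; move/implyP; apply.
  by move: h; apply: contra => /eqP ->.
Qed.

Lemma coefXM (w mu : 'X_{1..n}) (p : Cpoly n) :
  ('X_[w] * p)@_mu = if (w <= mu)%MM then p@_(mu - w)%MM else 0.
Proof.
case: ifP => hle.
  by rewrite mulrC -{1}(submK hle) addmC mcoeffMX.
rewrite {1}(mpolyE p) mulr_sumr raddf_sum /=; apply: big1 => k _.
rewrite -scalerAr -mpolyXD mcoeffZ mcoeffX.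
case: eqP => [e|_]; last by rewrite mulr0.
by move: hle; rewrite -e; move/negP; case; apply/mnm_lepP => i; rewrite mnmDE leq_addr.
Qed.

Lemma X2E (a : 'I_n) : ('X_a : Cpoly n) ^+ 2 = 'X_[(U_(a) *+ 2)%MM].
Proof. by rewrite mpolyXn. Qed.

Lemma h2A q S (a : 'I_n) : a \notin S ->
  h2 q.+1 (a |: S) = h2 q.+1 S + 'X_a ^+ 2 * h2 q (a |: S).
Proof.
move=> haS; apply/mpolyP => mu.
rewrite mcoeffD X2E coefXM !h2coeff.
have hdegw : mdeg (U_(a) *+ 2)%MM = 2%N by rewrite mdegMn mdeg1.
case: ifP => hle.
- have ha2 : (2 <= mu a)%N.
    by move/mnm_lepP: hle => /(_ a); rewrite mulmnE mnm1E eqxx.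
  have -> : okc q.+1 S mu = false.
    apply/negbTE/negP => /andP [_ /forallP /(_ a) /andP [_ /implyP h]].
    by move: haS; rewrite h //; rewrite -lt0n; apply: leq_trans ha2.
  rewrite add0r; congr (_%:R).
  rewrite /okc.
  have hd : mdeg mu = (mdeg (mu - U_(a) *+ 2)%MM + 2)%N.
    by have := mdegD (mu - U_(a) *+ 2)%MM (U_(a) *+ 2)%MM; rewrite submK // hdegw.
  congr andb.
    rewrite hd; apply/eqP/eqP; rewrite doubleS; lia.
  apply: eq_forallb => s; rewrite mnmBE mulmnE mnm1E.
  case: (eqVneq a s) => [<-|hne] /=; last by rewrite mul0n subn0 !inE (eq_sym s a) (negbTE hne).
  rewrite mul1n oddB // /= addbF !setU11 !implybT.
  by [].
- rewrite addr0; congr (_%:R); rewrite /okc; congr andb.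
  have ha2 : (mu a < 2)%N.
    rewrite ltnNge; apply/negP => h; move/negP: hle; case; apply/mnm_lepP => i.
    by rewrite mulmnE mnm1E; case: (eqVneq a i) => [<-|]; rewrite ?mul1n ?mul0n.
  apply: eq_forallb => s; rewrite !inE.
  case: (eqVneq s a) => [->|hne] /=; last by [].
  rewrite (negbTE haS).
  by case: (mu a) ha2 => [|[|]].
Qed.

Lemma h2B q S (j : 'I_n) : j \notin S -> (h2 q S)^`M(j) = 0.
Proof.
move=> hj; apply/mpolyP => mu.
rewrite mcoeff_deriv h2coeff mcoeff0.
suff -> : okc q S (mu + U_(j))%MM = false by rewrite mul0rn.
apply/negbTE/negP => /andP [_ /forallP /(_ j) /andP [_ /implyP h]].
by move: hj; rewrite h // mnmDE mnm1E eqxx addn1.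
Qed.

Lemma dX2 (a j : 'I_n) :
  (('X_a : Cpoly n) ^+ 2)^`M(j) = if a == j then 2%:R * 'X_j else 0.
Proof.
rewrite X2E mderivX mulmnE mnm1E.
case: (eqVneq a j) => [->|hne]; last by rewrite mul0n scale0r.
rewrite mul1n -mul_mpolyC mpolyC_nat; congr (_ * _); congr ('X_[_]).
by apply/mnmP => i; rewrite mnmBE mulmnE mnm1E; case: (j == i).
Qed.
End S.

Section Ideal.
Variable n : nat.
Variable g : 'I_n -> Cpoly n.

Lemma ideal_gen i : in_ideal g (g i).
Proof.
exists (fun k => (k == i)%:R); rewrite (bigD1 i) //= eqxx mul1r big1 ?addr0 //.
by move=> k /negbTE ->; rewrite mul0r.
Qed.

Lemma ideal_add f1 f2 : in_ideal g f1 -> in_ideal g f2 -> in_ideal g (f1 + f2).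
Proof.
move=> [c1 ->] [c2 ->]; exists (fun i => c1 i + c2 i).
by rewrite -big_split; apply: eq_bigr => i _; rewrite mulrDl.
Qed.

Lemma ideal_mul p f : in_ideal g f -> in_ideal g (p * f).
Proof.
move=> [c ->]; exists (fun i => p * c i).
by rewrite mulr_sumr; apply: eq_bigr => i _; rewrite mulrA.
Qed.

Lemma ideal_sub f1 f2 : in_ideal g f1 -> in_ideal g f2 -> in_ideal g (f1 - f2).
Proof.
move=> h1 h2; apply: ideal_add => //.
by rewrite -mulN1r; apply: ideal_mul.
Qed.
End Ideal.

Theorem mainTheorem4 (n : nat) (J : {set 'I_n}) (j : 'I_n) :
  j \in J -> I_J J ((h2 (n - #|J|).+1 J)^`M(j)).
Proof.
move=> hj.
pose X (k : nat) := J :|: [set i : 'I_n | (k <= i)%N].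
pose q (k : nat) := (n - #|X k|).+1.
have key : forall d, (j + d <= n)%N -> I_J J ((h2 (q (j + d)%N) (X (j + d)%N))^`M(j)).
  elim => [|d IH] hd.
    rewrite addn0.
    have := ideal_gen (pJ J) j; rewrite /pJ hj.
    by [].
  have hk : (j + d < n)%N by rewrite addnS in hd.
  pose ko : 'I_n := Ordinal hk.
  have IH' := IH (ltnW hk).
  case: (boolP (ko \in J)) => hko.
    have eX : X (j + d.+1)%N = X (j + d)%N.
      apply/setP => i; rewrite !inE addnS (leq_eqVlt (j + d)%N).
      case: eqP => [e|] /=; last by [].
      have -> : i = ko by apply: val_inj; rewrite /= e.
      by rewrite hko.
    by rewrite /q eX.
  set Y := X (j + d.+1)%N.
  have hXk : X (j + d)%N = ko |: Y.
    apply/setP => i; rewrite !inE addnS (leq_eqVlt (j + d)%N).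
    case: (eqVneq i ko) => [->|hne] /=; first by rewrite eqxx /= orbT.
    have -> : ((j + d)%N == i) = false.
      by apply/negbTE; apply: contra hne => /eqP e; apply/eqP/val_inj; rewrite /= e.
    by [].
  have hkY : ko \notin Y by rewrite !inE negb_or hko /= -ltnNge addnS.
  have hcard : #|X (j + d)%N| = #|Y|.+1 by rewrite hXk cardsU1 hkY.
  have hle : (#|X (j + d)%N| <= n)%N by rewrite -[X in (_ <= X)%N]card_ord max_card.
  have hq : q (j + d.+1)%N = (q (j + d)%N).+1 by rewrite /q -/Y hcard in hle *; lia.
  rewrite hq.
  set Q := q (j + d)%N.
  set Z := X (j + d)%N in IH' hXk hcard hle *.
  have hG : I_J J (h2 Q Z).
    have := ideal_gen (pJ J) ko; rewrite /pJ (negbTE hko).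
    by [].
  have hne : ko != j by apply: contraNneq hko => ->.
  have hjX : j \in Z by rewrite /Z !inE hj.
  have e1 := h2A Q hkY; rewrite -hXk in e1.
  have hjn : j \notin Z :\ j by rewrite setD11.
  have e3 := h2A Q hjn.
  rewrite setD1K // in e3.
  have -> : h2 Q.+1 Y = h2 Q.+1 Z - 'X_ko ^+ 2 * h2 Q Z.
    by rewrite e1 addrK.
  rewrite mderivB mderivM dX2 (negbTE hne) mul0r add0r.
  apply: ideal_sub; last by apply: ideal_mul.
  rewrite e3 mderivD h2B ?setD11 // add0r mderivM dX2 eqxx.
  by apply: ideal_add; apply: ideal_mul.
have := key (n - j)%N; rewrite subnKC; last by apply: ltnW.
have eXn : X n = J.
  apply/setP => i; rewrite !inE; have := ltn_ord i; rewrite ltnNge => /negbTE ->.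
  by rewrite orbF.
by move=> /(_ (leqnn n)); rewrite /q eXn.
Qed.
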